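(* Let $f=\frac1n\sum_{i=1}^nf_i$ with each $f_i$ differentiable with $\|\nabla f_i\|\le G_i$ and $\nabla f_i$ $L_i$-Lipschitz, $\tilde L=\frac1n\sum_iL_i>0$, $r:\mathbb{R}^d\to\mathbb{R}$ with existing proximal mapping, $F=f+r$. Fix a proper sampling with marginals $p_i$, pair matrix $\mathbf P$, a vector $v$ with $\mathbf P-pp^\top\preceq\mathrm{Diag}(p_1v_1,\dots,p_nv_n)$, and $Q=\sum_{i=1}^n\frac{v_iL_i^2}{p_in^2}$. Let $\eta>0$ and $m\ge1$ satisfy $\frac12(\frac1\eta-2\tilde L)-\frac{mQ}{2\tilde L}>0$. Then for the iterates of ProxSARAH-AS, for every $j\ge1$, $$\sum_{t=1}^mE\big[\|x_{t+1}^{(j)}-x_t^{(j)}\|^2\big]\le\frac{1}{\frac12(\frac1\eta-2\tilde L)-\frac{mQ}{2\tilde L}}E\big[F(x_0^{(j)})-F(x_{m+1}^{(j)})\big].$$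
   Context: A sampling is a random subset $S\subseteq[n]$ with $p_i=\mathrm{Prob}(i\in S)>0$, $\mathbf P_{ij}=\mathrm{Prob}(\{i,j\}\subseteq S)$; $\preceq$ is the positive semidefinite order. $\mathrm{prox}_{\eta r}(y)=\arg\min_x\{\frac1{2\eta}\|x-y\|^2+r(x)\}$. ProxSARAH-AS: for $j=1,2,\dots$: $x_0^{(j)}=\tilde x^{(j)}$, $\mathcal V_0^{(j)}=\frac1n\sum_i\nabla f_i(x_0^{(j)})$, $x_1^{(j)}=x_0^{(j)}$; for $t=1,\dots,m$: draw $S_t^{(j)}$ independently of the past, $\mathcal V_t^{(j)}=\sum_{i\in S_t^{(j)}}\frac1{np_i}(\nabla f_i(x_t^{(j)})-\nabla f_i(x_{t-1}^{(j)}))+\mathcal V_{t-1}^{(j)}$, $x_{t+1}^{(j)}\in\mathrm{prox}_{\eta r}(x_t^{(j)}-\eta\mathcal V_t^{(j)})$; then $\tilde x^{(j+1)}=x_{m+1}^{(j)}$. *)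

(* Defs.v *)
From HB Require Import structures.
From mathcomp Require Import all_boot all_order all_algebra.
From mathcomp Require Import all_classical all_reals all_analysis.
Set Implicit Arguments. Unset Strict Implicit. Unset Printing Implicit Defensive.
Import Order.TTheory GRing.Theory Num.Theory.
Import numFieldNormedType.Exports.
Local Open Scope ring_scope.

Section Defs.
Variable R : realType.

Definition dotv (d : nat) (x y : 'rV[R]_d) : R := \sum_(k < d) x 0 k * y 0 k.
Definition sqnorm (d : nat) (x : 'rV[R]_d) : R := dotv x x.
Definition enorm (d : nat) (x : 'rV[R]_d) : R := Num.sqrt (sqnorm x).

Definition psd_le (n : nat) (A B : 'M[R]_n) : Prop :=
  forall h : 'cV[R]_n, 0 <= (h^T *m (B - A) *m h) 0 0.

Definition is_sampling (n : nat) (pS : {set 'I_n} -> R) : Prop :=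
  (forall S, 0 <= pS S) /\ \sum_(S : {set 'I_n}) pS S = 1.

Definition marg (n : nat) (pS : {set 'I_n} -> R) (i : 'I_n) : R :=
  \sum_(S : {set 'I_n} | i \in S) pS S.
Definition pairmx (n : nat) (pS : {set 'I_n} -> R) : 'M[R]_n :=
  \matrix_(i, j) \sum_(S : {set 'I_n} | (i \in S) && (j \in S)) pS S.
Definition margv (n : nat) (pS : {set 'I_n} -> R) : 'cV[R]_n :=
  \col_i marg pS i.

Definition proper_sampling (n : nat) (pS : {set 'I_n} -> R) : Prop :=
  is_sampling pS /\ forall i, 0 < marg pS i.

(* px is a selection of the proximal mapping prox_{eta r} *)
Definition is_prox_sel (d : nat) (eta : R) (r : 'rV[R]_d -> R)
  (px : 'rV[R]_d -> 'rV[R]_d) : Prop :=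
  forall y z, (2 * eta)^-1 * sqnorm (px y - y) + r (px y)
              <= (2 * eta)^-1 * sqnorm (z - y) + r z.

Variables (n d : nat) (g : 'I_n -> 'rV[R]_d -> 'rV[R]_d)
  (pS : {set 'I_n} -> R) (eta : R) (px : 'rV[R]_d -> 'rV[R]_d).

Definition fullgrad (x : 'rV[R]_d) : 'rV[R]_d := n%:R^-1 *: \sum_i g i x.

(* inner loop of one epoch started at x0, with samples ws 0, ws 1, ...
   (ws (t-1) is S_t).  state t = (x_t, x_{t+1}, V_t). *)
Fixpoint sarah_state (x0 : 'rV[R]_d) (ws : nat -> {set 'I_n}) (t : nat)
  : 'rV[R]_d * 'rV[R]_d * 'rV[R]_d :=
  match t with
  | 0 => (x0, x0, fullgrad x0)
  | t'.+1 =>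
      let: (a, b, V) := sarah_state x0 ws t' in
      let V' := \sum_(i in ws t') (n%:R * marg pS i)^-1 *: (g i b - g i a) + V in
      (b, px (b - eta *: V'), V')
  end.

Definition sarah_x (x0 : 'rV[R]_d) (ws : nat -> {set 'I_n}) (t : nat)
  : 'rV[R]_d := (sarah_state x0 ws t).1.1.

(* starting point tilde x^{(j+1)} of epoch j+1 (epochs numbered from 1):
   epoch j (1-based) uses samples ws ((j-1)*m + t - 1), t = 1..m *)
Fixpoint epoch_start (m : nat) (xinit : 'rV[R]_d) (ws : nat -> {set 'I_n})
  (j : nat) : 'rV[R]_d :=
  match j with
  | 0 => xinit
  | j'.+1 => sarah_x (epoch_start m xinit ws j') (fun k => ws (j' * m + k)) m.+1
  end.

Definition iter_x (m : nat) (xinit : 'rV[R]_d) (ws : nat -> {set 'I_n})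
  (j t : nat) : 'rV[R]_d :=
  sarah_x (epoch_start m xinit ws j.-1) (fun k => ws (j.-1 * m + k)) t.

(* expectation of X over N i.i.d. draws S from pS (later draws unused) *)
Definition expect (N : nat) (X : (nat -> {set 'I_n}) -> R) : R :=
  \sum_(w : {ffun 'I_N -> {set 'I_n}})
     (\prod_(k < N) pS (w k)) *
     X (fun k => if insub k is Some k' then w k' else finset.set0).

End Defs.

(* Main.v *)
Require Import Defs.
From HB Require Import structures.
From mathcomp Require Import all_boot all_order all_algebra.
From mathcomp Require Import all_classical all_reals all_analysis.
From mathcomp Require Import ring lra.
Set Implicit Arguments. Unset Strict Implicit. Unset Printing Implicit Defensive.
Import Order.TTheory GRing.Theory Num.Theory.
Import numFieldNormedType.Exports.
Local Open Scope ring_scope.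
Section Dot.
Variable R : realType.
Variable d : nat.
Implicit Types x y z : 'rV[R]_d.

Lemma dotvC x y : dotv x y = dotv y x.
Proof. by apply: eq_bigr => k _; rewrite mulrC. Qed.
Lemma dotvDl x y z : dotv (x + y) z = dotv x z + dotv y z.
Proof. by rewrite /dotv -big_split; apply: eq_bigr => k _; rewrite mxE mulrDl. Qed.
Lemma dotvNl x z : dotv (- x) z = - dotv x z.
Proof. by rewrite /dotv -sumrN; apply: eq_bigr => k _; rewrite mxE mulNr. Qed.
Lemma dotvBl x y z : dotv (x - y) z = dotv x z - dotv y z.
Proof. by rewrite dotvDl dotvNl. Qed.
Lemma dotvZl a x z : dotv (a *: x) z = a * dotv x z.
Proof. by rewrite /dotv mulr_sumr; apply: eq_bigr => k _; rewrite mxE mulrA. Qed.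
Lemma dotvDr x y z : dotv z (x + y) = dotv z x + dotv z y.
Proof. by rewrite dotvC dotvDl !(dotvC z). Qed.
Lemma dotvBr x y z : dotv z (x - y) = dotv z x - dotv z y.
Proof. by rewrite dotvC dotvBl !(dotvC z). Qed.
Lemma dotvZr a x z : dotv z (a *: x) = a * dotv z x.
Proof. by rewrite dotvC dotvZl dotvC. Qed.
Lemma dotv_suml (I : finType) (F : I -> 'rV[R]_d) z :
  dotv (\sum_i F i) z = \sum_i dotv (F i) z.
Proof.
rewrite /dotv exchange_big; apply: eq_bigr => k _.
by rewrite summxE mulr_suml.
Qed.
Lemma sqnorm_ge0 x : 0 <= sqnorm x.
Proof. by apply: sumr_ge0 => k _; rewrite -expr2 sqr_ge0. Qed.
Lemma sqnormE x : sqnorm x = enorm x ^+ 2.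
Proof. by rewrite /enorm sqr_sqrtr // sqnorm_ge0. Qed.
Lemma enorm_ge0 x : 0 <= enorm x.
Proof. exact: sqrtr_ge0. Qed.
Lemma sqnormD x y : sqnorm (x + y) = sqnorm x + 2 * dotv x y + sqnorm y.
Proof. rewrite /sqnorm !dotvDl !dotvDr (dotvC y x); ring. Qed.
Lemma sqnormB x y : sqnorm (x - y) = sqnorm x - 2 * dotv x y + sqnorm y.
Proof. rewrite /sqnorm !dotvBl !dotvBr (dotvC y x); ring. Qed.
Lemma sqnormZ a x : sqnorm (a *: x) = a ^+ 2 * sqnorm x.
Proof. rewrite /sqnorm dotvZl dotvZr; ring. Qed.
Lemma enormZ a x : enorm (a *: x) = `|a| * enorm x.
Proof. by rewrite /enorm sqnormZ sqrtrM ?sqr_ge0 // sqrtr_sqr. Qed.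

Lemma sqnorm0P x : sqnorm x = 0 -> dotv x = fun _ => 0.
Proof.
move=> /eqP; rewrite /sqnorm /dotv psumr_eq0 => [/allP H|k _]; last by rewrite -expr2 sqr_ge0.
apply: funext => y; apply: big1 => k _.
have := H k (mem_index_enum k); rewrite implyTb -expr2 sqrf_eq0 => /eqP ->.
by rewrite mul0r.
Qed.

Lemma cauchy_schwarz x y : dotv x y <= enorm x * enorm y.
Proof.
have [x0|xn0] := eqVneq (enorm x) 0.
  have : sqnorm x = 0 by rewrite sqnormE x0 expr0n.
  by move/sqnorm0P => ->; rewrite x0 mul0r.
have [y0|yn0] := eqVneq (enorm y) 0.
  have : sqnorm y = 0 by rewrite sqnormE y0 expr0n.
  by move/sqnorm0P => H; rewrite dotvC H y0 mulr0.
have := sqnorm_ge0 (enorm y *: x - enorm x *: y).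
rewrite sqnormB !sqnormZ dotvZl dotvZr !sqnormE.
have hx := enorm_ge0 x; have hy := enorm_ge0 y.
have p : 0 < enorm x * enorm y by rewrite mulr_gt0 // lt0r ?xn0 ?yn0.
move=> H.
have H2 : enorm x * enorm y * dotv x y <= enorm x * enorm y * (enorm x * enorm y) by nra.
by rewrite -(ler_pM2l p).
Qed.

End Dot.
Section Descent.
Variable R : realType.
Variable d : nat.

Lemma descent (f : 'rV[R]_d -> R) (g : 'rV[R]_d -> 'rV[R]_d) (L : R) :
  (forall x, differentiable f x) -> (forall x h, 'd f x h = dotv (g x) h) ->
  (forall x y, enorm (g x - g y) <= L * enorm (x - y)) ->
  forall x y, f y <= f x + dotv (g x) (y - x) + L / 2 * sqnorm (y - x).
Proof.
move=> fd fdE gL x y.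
set h := y - x.
pose psi := fun s : R => f (x + s *: h).
have Dpsi : forall s : R, is_derive s 1 psi (dotv (g (x + s *: h)) h).
  move=> s.
  have E : (fun t : R => t^-1 *: ((psi \o shift s) (t *: 1) - psi s)) =
           (fun t : R => t^-1 *: ((f \o shift (x + s *: h)) (t *: h) - f (x + s *: h))).
    apply: funext => t /=; rewrite /psi; congr (_ *: (f _ - _)).
    rewrite scalerDl addrCA; congr (_ *: _ + _); exact: mulr1.
  apply: DeriveDef.
    by rewrite /derivable E; apply: diff_derivable.
  by rewrite /derive E -/(derive f _ h) deriveE.
pose c1 := dotv (g x) h.
pose c2 := L / 2 * sqnorm h.
pose phi := psi - (c1 \*: (@id R) + c2 \*: ((@id R) * (@id R))).
have Dphi : forall s : R, is_derive s 1 phi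
   (dotv (g (x + s *: h)) h - (c1 *: 1 + c2 *: (s *: 1 + s *: 1))).
  move=> s; apply: is_deriveB.
have [c c01 Hc] := @MVT R phi (fun s => dotv (g (x + s *: h)) h - (c1 *: 1 + c2 *: (s *: 1 + s *: 1))) 0 1 ltr01 (fun s _ => Dphi s)
   (derivable_within_continuous (fun s _ => @ex_derive _ _ _ _ _ _ _ (Dphi s))).
have Hc' : (f (x + 1 *: h) - (c1 * 1 + c2 * (1 * 1))) - (f (x + 0 *: h) - (c1 * 0 + c2 * (0 * 0))) = (dotv (g (x + c *: h)) h - (c1 * 1 + c2 * (c * 1 + c * 1))) * (1 - 0) := Hc.
move: c01; rewrite in_itv /= => /andP [c0 c1'].
have : dotv (g (x + c *: h)) h <= dotv (g x) h + L * c * sqnorm h.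
  rewrite -[dotv (g (x + _)) h](subrK (dotv (g x) h)) -dotvBl addrC lerD2l.
  apply: le_trans (cauchy_schwarz _ _) _.
  have := gL (x + c *: h) x; rewrite [x + _ - x]addrC addKr enormZ.
  rewrite (ger0_norm (ltW c0)) => H.
  rewrite sqnormE expr2 mulrA.
  by apply: ler_wpM2r; [exact: enorm_ge0 | rewrite -mulrA].
have hh : x + h = y by rewrite /h addrC subrK.
rewrite scale1r scale0r hh addr0 in Hc'.
rewrite /c1 /c2 in Hc' *.
have sh := sqnorm_ge0 h.
move=> H; rewrite !(mulr1,mul1r,mulr0,mul0r,subr0,addr0) in Hc'.
have E : L / 2 * sqnorm h * (c + c) = L * c * sqnorm h by field.
rewrite E in Hc'; lra.
Qed.
End Descent.
Section Expect.
Variable R : realType.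
Variable n : nat.
Variable pS : {set 'I_n} -> R.
Hypothesis pS_ge0 : forall S, 0 <= pS S.
Hypothesis pS_sum : \sum_S pS S = 1.

Lemma expect_le N (X Y : (nat -> {set 'I_n}) -> R) :
  (forall ws, X ws <= Y ws) -> expect pS N X <= expect pS N Y.
Proof.
move=> H; apply: ler_sum => w _; apply: ler_wpM2l; last exact: H.
by apply: prodr_ge0 => k _.
Qed.

Lemma expectD N (X Y : (nat -> {set 'I_n}) -> R) :
  expect pS N (fun ws => X ws + Y ws) = expect pS N X + expect pS N Y.
Proof. by rewrite /expect -big_split; apply: eq_bigr => w _; rewrite mulrDr. Qed.

Lemma expectZ N c (X : (nat -> {set 'I_n}) -> R) :
  expect pS N (fun ws => c * X ws) = c * expect pS N X.
Proof. by rewrite /expect mulr_sumr; apply: eq_bigr => w _; rewrite mulrCA. Qed.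

Lemma expectN N (X : (nat -> {set 'I_n}) -> R) :
  expect pS N (fun ws => - X ws) = - expect pS N X.
Proof. by rewrite /expect -sumrN; apply: eq_bigr => w _; rewrite mulrN. Qed.

Lemma expectB N (X Y : (nat -> {set 'I_n}) -> R) :
  expect pS N (fun ws => X ws - Y ws) = expect pS N X - expect pS N Y.
Proof. by rewrite expectD expectN. Qed.

Lemma expect_sum N (I : Type) (r : seq I) (P : pred I) (X : I -> (nat -> {set 'I_n}) -> R) :
  expect pS N (fun ws => \sum_(i <- r | P i) X i ws) = \sum_(i <- r | P i) expect pS N (X i).
Proof.
rewrite /expect exchange_big /=; apply: eq_bigr => w _.
by rewrite mulr_sumr.
Qed.

Lemma expect_ext N (X Y : (nat -> {set 'I_n}) -> R) :
  (forall ws, X ws = Y ws) -> expect pS N X = expect pS N Y.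
Proof. by move=> H; apply: eq_bigr => w _; rewrite H. Qed.

Definition extw N (w : {ffun 'I_N -> {set 'I_n}}) : nat -> {set 'I_n} :=
  fun k => if insub k is Some k' then w k' else finset.set0.

Lemma expect_resample N (k0 : 'I_N) (X : (nat -> {set 'I_n}) -> R) :
  expect pS N X = expect pS N (fun ws => \sum_S pS S * X (fun k => if k == val k0 then S else ws k)).
Proof.
pose upd (w : {ffun 'I_N -> {set 'I_n}}) S := [ffun k => if k == k0 then S else w k].
have extu : forall w S, (fun k => if k == val k0 then S else extw w k) = extw (upd w S).
  move=> w S; apply: funext => k; rewrite /extw.
  case: insubP => [k' _ kk|].
    by rewrite ffunE -kk.
  by case: eqP => // -> /negP; rewrite ltn_ord.
have updK : forall w S, upd (upd w S) (w k0) = w.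
  move=> w S; apply/ffunP => k; rewrite !ffunE.
  by case: eqVneq => [->|].
have W : forall w S, (\prod_(k < N) pS (upd w S k)) * pS (w k0) =
                     (\prod_(k < N) pS (w k)) * pS S.
  move=> w S.
  rewrite (bigD1 k0) // [in RHS](bigD1 k0) // /= ffunE eqxx.
  rewrite (eq_bigr (fun k => pS (w k))); last first.
    by move=> k /negbTE kk; rewrite ffunE kk.
  ring.
pose phi (p : {ffun 'I_N -> {set 'I_n}} * {set 'I_n}) := (upd p.1 p.2, p.1 k0).
have phiK : involutive phi.
  by move=> [w S]; rewrite /phi /= updK /upd ffunE eqxx.
rewrite /expect.
under [RHS]eq_bigr => w _ do rewrite mulr_sumr.
rewrite pair_big /= (reindex_inj (inv_inj phiK)) /=.
transitivity (\sum_(p : {ffun 'I_N -> {set 'I_n}} * {set 'I_n})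
   (\prod_(k < N) pS (p.1 k)) * pS p.2 * X (extw p.1)); last first.
  apply: eq_bigr => [[w S]] _ /=.
  by rewrite extu updK mulrA -W.
rewrite -(pair_big predT predT (fun (w : {ffun 'I_N -> {set 'I_n}}) (S : {set 'I_n}) => \prod_(k < N) pS (w k) * pS S * X (extw w))) /=.
apply: eq_bigr => w _.
by rewrite -mulr_suml -mulr_sumr pS_sum mulr1.
Qed.

End Expect.
Section Var.
Variable R : realType.
Variable n : nat.
Variable pS : {set 'I_n} -> R.
Variable v : 'I_n -> R.
Hypothesis pS_ge0 : forall S, 0 <= pS S.
Hypothesis pS_sum : \sum_S pS S = 1.
Hypothesis p_gt0 : forall i, 0 < marg pS i.
Hypothesis Hpsd : psd_le (pairmx pS - margv pS *m (margv pS)^T)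
         (diag_mx (\row_i (marg pS i * v i))).

Local Notation p := (marg pS).

Lemma quadE (M : 'M[R]_n) (h : 'cV[R]_n) :
  (h^T *m M *m h) 0 0 = \sum_i \sum_j h i 0 * M i j * h j 0.
Proof.
rewrite mxE exchange_big; apply: eq_bigr => j _; rewrite mxE mulr_suml.
by apply: eq_bigr => i _; rewrite mxE.
Qed.

Lemma psd_quad (b : 'I_n -> R) :
  \sum_i \sum_j (pairmx pS i j - p i * p j) * b i * b j <= \sum_i p i * v i * b i ^+ 2.
Proof.
have := Hpsd (\col_i b i); rewrite quadE.
under eq_bigr => i _ do under eq_bigr => j _ do
  rewrite !mxE big_ord1 !mxE mulrBr mulrBl.
under eq_bigr => i _ do rewrite sumrB.
rewrite sumrB subr_ge0 => H.
have E1 : \sum_i \sum_j (pairmx pS i j - p i * p j) * b i * b j =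
  \sum_i \sum_(i0 : 'I_n) b i * (\sum_(S : {set 'I_n} | (i \in S) && (i0 \in S)) pS S - p i * p i0) * b i0.
  by apply: eq_bigr => i _; apply: eq_bigr => j _; rewrite !mxE; ring.
have E2 : \sum_i p i * v i * b i ^+ 2 = \sum_i \sum_(i0 : 'I_n) b i * (p i * v i *+ (i == i0)) * b i0.
  apply: eq_bigr => i _; rewrite (bigD1 i) //= big1 ?addr0.
    by rewrite eqxx mulr1n; ring.
  by move=> j /negbTE ji; rewrite eq_sym ji mulr0n mulr0 mul0r.
by rewrite E1 E2.
Qed.


Lemma sum_ind (T : finType) (A : {set T}) (F : T -> R) :
  \sum_(i in A) F i = \sum_i (i \in A)%:R * F i.
Proof. by rewrite big_mkcond; apply: eq_bigr => i _; case: (i \in A); rewrite ?mul1r ?mul0r. Qed.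

Lemma p_le1 i : p i <= 1.
Proof.
rewrite -pS_sum /marg big_mkcond /=; apply: ler_sum => S _.
by case: (i \in S).
Qed.

Lemma v_ge0 i : 0 <= v i.
Proof.
have := psd_quad (fun j => (j == i)%:R).
have L1 : \sum_i0 \sum_j (pairmx pS i0 j - p i0 * p j) * (i0 == i)%:R * (j == i)%:R
   = pairmx pS i i - p i * p i.
  rewrite (bigD1 i) //= [X in _ + X]big1 ?addr0 => [|k ki]; last first.
    by apply: big1 => j _; rewrite (negbTE ki) mulr0 mul0r.
  rewrite (bigD1 i) //= [X in _ + X]big1 ?addr0 => [|k ki]; last by rewrite (negbTE ki) mulr0.
  by rewrite eqxx !mulr1.
have L2 : \sum_i0 p i0 * v i0 * (i0 == i)%:R ^+ 2 = p i * v i.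
  rewrite (bigD1 i) //= [X in _ + X]big1 ?addr0 => [|k ki]; last by rewrite (negbTE ki) expr0n /= mulr0.
  by rewrite eqxx expr1n mulr1.
rewrite L1 L2.
have -> : pairmx pS i i = p i by rewrite mxE /marg; apply: eq_bigl => S; rewrite andbb.
have := p_gt0 i; have := p_le1 i; move=> h1 h2 h3.
have : 0 <= p i * v i by nra.
by rewrite pmulr_rge0.
Qed.

Lemma var_scalar (u : R) (a : 'I_n -> R) :
  \sum_S pS S * (u + n%:R^-1 * \sum_i a i - \sum_(i in S) (n%:R * p i)^-1 * a i) ^+ 2
  <= u ^+ 2 + \sum_i v i / (p i * n%:R ^+ 2) * a i ^+ 2.
Proof.
pose b i := (n%:R * p i)^-1 * a i.
have hD : n%:R^-1 * \sum_i a i = \sum_i p i * b i.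
  rewrite mulr_sumr; apply: eq_bigr => i _; rewrite /b.
  have pn := p_gt0 i; have nn : n%:R != 0 :> R by rewrite pnatr_eq0 -lt0n (leq_ltn_trans _ (ltn_ord i)).
  by field; rewrite ?nn ?(gt_eqF pn).
pose D := \sum_i p i * b i.
pose E (S : {set 'I_n}) := \sum_(i in S) b i.
have hE1 : \sum_S pS S * E S = D.
  rewrite /E /D; under eq_bigr => S _ do rewrite sum_ind mulr_sumr.
  rewrite exchange_big; apply: eq_bigr => i _.
  rewrite /marg [in RHS]big_mkcond [in RHS]mulr_suml; apply: eq_bigr => S _ /=.
  by case: (i \in S); rewrite ?mul1r ?mul0r ?mulr0.
have hE2 : \sum_S pS S * E S ^+ 2 = \sum_i \sum_j pairmx pS i j * b i * b j.
  rewrite /E; under eq_bigr => S _ do rewrite sum_ind expr2 mulr_suml mulr_sumr.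
  under eq_bigr => S _ do under eq_bigr => i _ do rewrite mulr_sumr mulr_sumr.
  rewrite exchange_big; apply: eq_bigr => i _.
  rewrite exchange_big; apply: eq_bigr => j _.
  rewrite mxE [in RHS]big_mkcond !mulr_suml; apply: eq_bigr => S _ /=.
  by case: (i \in S); case: (j \in S); rewrite /= ?mul1r ?mul0r ?mulr0 ?mulr1 ?mulrA.
have hsq : D ^+ 2 = \sum_i \sum_j p i * p j * b i * b j.
  rewrite /D expr2 mulr_suml; apply: eq_bigr => i _; rewrite mulr_sumr.
  by apply: eq_bigr => j _; ring.
have expand : forall S, pS S * (u + D - E S) ^+ 2 =
   (u + D) ^+ 2 * pS S - 2 * (u + D) * (pS S * E S) + pS S * E S ^+ 2.
  by move=> S; ring.
rewrite hD -/D (eq_bigr _ (fun S _ => expand S)) big_split sumrB /=.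
rewrite -mulr_sumr -mulr_sumr pS_sum hE1 hE2 mulr1.
have hq := psd_quad b.
have hr : \sum_i p i * v i * b i ^+ 2 = \sum_i v i / (p i * n%:R ^+ 2) * a i ^+ 2.
  apply: eq_bigr => i _; rewrite /b.
  have pn := p_gt0 i; have nn : n%:R != 0 :> R by rewrite pnatr_eq0 -lt0n (leq_ltn_trans _ (ltn_ord i)).
  by field; rewrite ?nn ?(gt_eqF pn).
have hQ : \sum_i \sum_j (pairmx pS i j - p i * p j) * b i * b j =
   \sum_i \sum_j pairmx pS i j * b i * b j - D ^+ 2.
  rewrite hsq -sumrB; apply: eq_bigr => k _; rewrite -sumrB; apply: eq_bigr => l _; ring.
rewrite hQ hr in hq.
have : (u + D) ^+ 2 - 2 * (u + D) * D = u ^+ 2 - D ^+ 2 by ring.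
lra.
Qed.

End Var.
Section VarVec.
Variable R : realType.
Variables n d : nat.
Variable pS : {set 'I_n} -> R.
Variable v : 'I_n -> R.
Hypothesis pS_ge0 : forall S, 0 <= pS S.
Hypothesis pS_sum : \sum_S pS S = 1.
Hypothesis p_gt0 : forall i, 0 < marg pS i.
Hypothesis Hpsd : psd_le (pairmx pS - margv pS *m (margv pS)^T)
         (diag_mx (\row_i (marg pS i * v i))).
Variable g : 'I_n -> 'rV[R]_d -> 'rV[R]_d.
Variable L : 'I_n -> R.
Hypothesis gL : forall i x y, enorm (g i x - g i y) <= L i * enorm (x - y).

Lemma sqnorm_coord (x : 'rV[R]_d) : sqnorm x = \sum_k x 0 k ^+ 2.
Proof. by apply: eq_bigr => k _; rewrite expr2. Qed.

Lemma var_step (X Y V : 'rV[R]_d) :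
  \sum_S pS S * sqnorm (fullgrad g Y -
      (\sum_(i in S) (n%:R * marg pS i)^-1 *: (g i Y - g i X) + V))
  <= sqnorm (fullgrad g X - V) +
     (\sum_i v i * L i ^+ 2 / (marg pS i * n%:R ^+ 2)) * sqnorm (Y - X).
Proof.
pose u k := n%:R^-1 * \sum_i g i X 0 k - V 0 k.
pose a i k := g i Y 0 k - g i X 0 k.
have coord : forall (S : {set 'I_n}) (k : 'I_d), (fullgrad g Y - (\sum_(i in S) (n%:R * marg pS i)^-1 *: (g i Y - g i X) + V)) 0 k
   = u k + n%:R^-1 * \sum_i a i k - \sum_(i in S) (n%:R * marg pS i)^-1 * a i k.
  move=> S k; rewrite /u /a /fullgrad ?mxE ?summxE ?mxE.

  set T := (X in _ - (X + _)).
  have -> : T = \sum_(i in S) (n%:R * marg pS i)^-1 * (g i Y 0 k - g i X 0 k).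
    by rewrite /T; apply: eq_bigr => i _; rewrite !mxE.
  rewrite sumrB; ring.
under eq_bigr => S _ do rewrite sqnorm_coord mulr_sumr.
rewrite exchange_big /=.
under eq_bigr => k _ do under eq_bigr => S _ do rewrite coord.

apply: le_trans (ler_sum _ (fun k _ => var_scalar pS_sum p_gt0 Hpsd (u k) (fun i => a i k))) _.
rewrite big_split /=.
have -> : \sum_k u k ^+ 2 = sqnorm (fullgrad g X - V).
  rewrite sqnorm_coord; apply: eq_bigr => k _; rewrite /u /fullgrad !mxE summxE.
  by [].
rewrite lerD2l exchange_big mulr_suml /=; apply: ler_sum => i _.
have c0 : 0 <= v i / (marg pS i * n%:R ^+ 2).
  have vi := v_ge0 pS_ge0 pS_sum p_gt0 Hpsd i; have pi := p_gt0 i.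
  apply: divr_ge0 => //; apply: mulr_ge0; [exact: ltW | exact: exprn_ge0 (ler0n _ _)].
rewrite -mulr_sumr.
have -> : \sum_k a i k ^+ 2 = sqnorm (g i Y - g i X).
  by rewrite sqnorm_coord; apply: eq_bigr => k _; rewrite /a !mxE.
have hs : sqnorm (g i Y - g i X) <= L i ^+ 2 * sqnorm (Y - X).
  rewrite !sqnormE -exprMn; have := gL i Y X; have := enorm_ge0 (g i Y - g i X).
  move=> h1 h2; rewrite expr2 [X in _ <= X]expr2; nra.
apply: le_trans (ler_wpM2l c0 hs) _.
have -> : v i * L i ^+ 2 / (marg pS i * n%:R ^+ 2) * sqnorm (Y - X) = v i / (marg pS i * n%:R ^+ 2) * (L i ^+ 2 * sqnorm (Y - X)) by ring.
done.
Qed.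
End VarVec.
Section Det.
Variable R : realType.
Variables n d : nat.
Variable f : 'I_n -> 'rV[R]_d -> R.
Variable g : 'I_n -> 'rV[R]_d -> 'rV[R]_d.
Variable L : 'I_n -> R.
Variable r : 'rV[R]_d -> R.
Variable px : 'rV[R]_d -> 'rV[R]_d.
Variable eta : R.
Hypothesis fd : forall i x, differentiable (f i) x.
Hypothesis fdE : forall i x h, 'd (f i) x h = dotv (g i x) h.
Hypothesis gL : forall i x y, enorm (g i x - g i y) <= L i * enorm (x - y).
Hypothesis Lt_gt0 : 0 < n%:R^-1 * \sum_i L i.
Hypothesis eta_gt0 : 0 < eta.
Hypothesis hprox : is_prox_sel eta r px.

Lemma avg_descent x y :
  n%:R^-1 * \sum_i f i y <= n%:R^-1 * \sum_i f i x + dotv (fullgrad g x) (y - x)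
     + (n%:R^-1 * \sum_i L i) / 2 * sqnorm (y - x).
Proof.
have H : \sum_i f i y <= \sum_i (f i x + dotv (g i x) (y - x) + L i / 2 * sqnorm (y - x)).
  by apply: ler_sum => i _; exact: descent (fd i) (fdE i) (gL i) x y.
rewrite !big_split /= in H.
have E : \sum_i L i / 2 * sqnorm (y - x) = (\sum_i L i) / 2 * sqnorm (y - x).
  by rewrite -!mulr_suml.
rewrite E -dotv_suml in H.
have := ler_wpM2l (x := n%:R^-1) _ H; rewrite invr_ge0 ler0n => /(_ isT) H2.
apply: le_trans H2 _; rewrite /fullgrad dotvZl.
rewrite le_eqVlt; apply/orP; left; apply/eqP; ring.
Qed.

Lemma det_step x V :
  2^-1 * (eta^-1 - 2 * (n%:R^-1 * \sum_i L i)) * sqnorm (px (x - eta *: V) - x)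
  - (2 * (n%:R^-1 * \sum_i L i))^-1 * sqnorm (fullgrad g x - V)
  <= (n%:R^-1 * \sum_i f i x + r x) - (n%:R^-1 * \sum_i f i (px (x - eta *: V)) + r (px (x - eta *: V))).
Proof.
set Lt := n%:R^-1 * \sum_i L i.
set y := px (x - eta *: V).
have hp := hprox (x - eta *: V) x.
rewrite -/y in hp.
have e1 : y - (x - eta *: V) = (y - x) + eta *: V.
  by rewrite opprB addrCA addrC.
have e2 : x - (x - eta *: V) = eta *: V by rewrite opprB addrCA subrr addr0.
rewrite e1 e2 sqnormD sqnormZ dotvZr !mulrDr in hp.
have k : (2 * eta)^-1 * (2 * (eta * dotv (y - x) V)) = dotv (y - x) V.
  by field; rewrite gt_eqF.
rewrite k in hp.
have Y2 := avg_descent x y.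
rewrite -/Lt in Y2.
have Y3 := sqnorm_ge0 (fullgrad g x - V - Lt *: (y - x)).
rewrite sqnormB sqnormZ dotvZr dotvBl (dotvC V) in Y3.
set A := sqnorm (y - x) in hp Y2 Y3 *.
set B := dotv (y - x) V in hp Y3.
set G := dotv (fullgrad g x) (y - x) in Y2 Y3.
set se := sqnorm (fullgrad g x - V) in Y3 *.
have Y3' : G - B <= (2 * Lt)^-1 * se + Lt / 2 * A.
  have L2 : 0 < 2 * Lt by rewrite mulr_gt0.
  rewrite -(ler_pM2l L2).
  have -> : 2 * Lt * ((2 * Lt)^-1 * se + Lt / 2 * A) = se + Lt ^+ 2 * A.
    by field; rewrite gt_eqF.
  lra.
have -> : 2^-1 * (eta^-1 - 2 * Lt) * A = (2 * eta)^-1 * A - Lt * A.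
  by field; rewrite gt_eqF.
lra.
Qed.
End Det.
Section Alg.
Variable R : realType.
Variables n d : nat.
Variable g : 'I_n -> 'rV[R]_d -> 'rV[R]_d.
Variable pS : {set 'I_n} -> R.
Variable eta : R.
Variable px : 'rV[R]_d -> 'rV[R]_d.

Local Notation st := (sarah_state g pS eta px).

Lemma st_S1 x0 ws t : (st x0 ws t.+1).1.1 = (st x0 ws t).1.2.
Proof. by rewrite /=; case: (st x0 ws t) => [[a b] V]. Qed.

Lemma st_S3 x0 ws t : (st x0 ws t.+1).2 =
  \sum_(i in ws t) (n%:R * marg pS i)^-1 *: (g i (st x0 ws t).1.2 - g i (st x0 ws t).1.1)
  + (st x0 ws t).2.
Proof. by rewrite /=; case: (st x0 ws t) => [[a b] V]. Qed.

Lemma st_S2 x0 ws t : (st x0 ws t.+1).1.2 =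
  px ((st x0 ws t.+1).1.1 - eta *: (st x0 ws t.+1).2).
Proof. by rewrite /=; case: (st x0 ws t) => [[a b] V]. Qed.

Lemma st_dep x0 ws1 ws2 t : (forall k, (k < t)%N -> ws1 k = ws2 k) ->
  st x0 ws1 t = st x0 ws2 t.
Proof.
elim: t => [//|t IH] H /=.
rewrite IH => [|k kt]; last by apply: H; exact: ltnW.
by rewrite H.
Qed.

Lemma epoch_dep m xinit ws1 ws2 j : (forall k, (k < j * m)%N -> ws1 k = ws2 k) ->
  epoch_start g pS eta px m xinit ws1 j = epoch_start g pS eta px m xinit ws2 j.
Proof.
elim: j => [//|j IH] H /=.
rewrite /sarah_x !st_S1 IH => [|k km]; last first.
  by apply: H; rewrite mulSn; apply: (leq_trans km); rewrite leq_addl.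
congr (_.1.2); apply: st_dep => k km; apply: H.
by rewrite mulSn addnC ltn_add2l.
Qed.

End Alg.
Lemma expect0 (R : realType) (n : nat) (pS : {set 'I_n} -> R) N :
  expect pS N (fun _ => 0) = 0.
Proof. by apply: big1 => w _; rewrite mulr0. Qed.

Lemma sqnorm0 (R : realType) d : sqnorm (0 : 'rV[R]_d) = 0.
Proof. by apply: big1 => k _; rewrite mxE mul0r. Qed.

Unset Implicit Arguments.

Theorem lemma5p3 (R : realType) (n d : nat)
  (f : 'I_n -> 'rV[R]_d -> R) (g : 'I_n -> 'rV[R]_d -> 'rV[R]_d)
  (G L : 'I_n -> R) (r : 'rV[R]_d -> R)
  (pS : {set 'I_n} -> R) (v : 'I_n -> R)
  (eta : R) (m : nat) (px : 'rV[R]_d -> 'rV[R]_d) (xinit : 'rV[R]_d) :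
  (forall i x, differentiable (f i) x) ->
  (forall i x h, 'd (f i) x h = dotv (g i x) h) ->
  (forall i x, enorm (g i x) <= G i) ->
  (forall i x y, enorm (g i x - g i y) <= L i * enorm (x - y)) ->
  let Lt := n%:R^-1 * \sum_i L i in
  0 < Lt ->
  let F := fun x => n%:R^-1 * \sum_i f i x + r x in
  proper_sampling pS ->
  psd_le (pairmx pS - margv pS *m (margv pS)^T)
         (diag_mx (\row_i (marg pS i * v i))) ->
  let Q := \sum_i v i * L i ^+ 2 / (marg pS i * n%:R ^+ 2) in
  0 < eta -> (1 <= m)%N ->
  let c := 2^-1 * (eta^-1 - 2 * Lt) - m%:R * Q / (2 * Lt) in
  0 < c ->
  is_prox_sel eta r px ->
  forall j : nat, (1 <= j)%N ->
  \sum_(1 <= t < m.+1)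
     expect pS (j * m) (fun ws => sqnorm (iter_x g pS eta px m xinit ws j t.+1
                                          - iter_x g pS eta px m xinit ws j t))
  <= c^-1 * expect pS (j * m) (fun ws =>
        F (iter_x g pS eta px m xinit ws j 0)
        - F (iter_x g pS eta px m xinit ws j m.+1)).
Proof.
move=> fd fdE _ gL Lt Lt0 F [[pS_ge0 pS_sum] p_gt0] Hpsd Q eta0 m1 c c0 hprox j j1.
set N := (j * m)%N.
set j' := j.-1.
have jE : j = j'.+1 by rewrite /j' prednK.
pose x0 ws := epoch_start g pS eta px m xinit ws j'.
pose wl (ws : nat -> {set 'I_n}) := fun k => ws (j' * m + k)%N.
pose S ws t := sarah_state g pS eta px (x0 ws) (wl ws) t.
have iterE : forall ws t, iter_x g pS eta px m xinit ws j t = (S ws t).1.1 by [].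
pose D t := expect pS N (fun ws => sqnorm ((S ws t).1.2 - (S ws t).1.1)).
pose E t := expect pS N (fun ws => sqnorm (fullgrad g (S ws t).1.1 - (S ws t).2)).
pose Ssum := \sum_(1 <= t < m.+1) D t.
have Q0 : 0 <= Q.
  apply: sumr_ge0 => i _.
  have vi := v_ge0 pS_ge0 pS_sum p_gt0 Hpsd i; have pi := p_gt0 i.
  apply: divr_ge0; first by apply: mulr_ge0 => //; exact: sqr_ge0.
  apply: mulr_ge0; [exact: ltW | exact: exprn_ge0 (ler0n _ _)].
have D0 : forall t, 0 <= D t.
  move=> t; rewrite -(expect0 pS N); apply: expect_le => // ws; exact: sqnorm_ge0.
have Dz : D 0 = 0.
  by rewrite /D -(expect0 pS N); apply: expect_ext => ws /=; rewrite subrr sqnorm0.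
have Ez : E 0 = 0.
  by rewrite /E -(expect0 pS N); apply: expect_ext => ws /=; rewrite subrr sqnorm0.
have LHS : \sum_(1 <= t < m.+1)
     expect pS (j * m) (fun ws => sqnorm (iter_x g pS eta px m xinit ws j t.+1
                                          - iter_x g pS eta px m xinit ws j t)) = Ssum.
  apply: eq_bigr => t _; apply: expect_ext => ws.
  by rewrite !iterE /S st_S1.
rewrite LHS.
have rec : forall t, (t < m)%N -> E t.+1 <= E t + Q * D t.
  move=> t tm.
  have k0lt : (j' * m + t < N)%N by rewrite /N jE mulSn [(m + _)%N]addnC ltn_add2l.
  rewrite /E (expect_resample pS_sum (Ordinal k0lt)) /= -expectZ -expectD.
  apply: expect_le => // ws.
  set ws2 := fun S0 => fun k => if k == (j' * m + t)%N then S0 else ws k.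
  have x0E : forall S0, x0 (ws2 S0) = x0 ws.
    move=> S0; apply: epoch_dep => k km; rewrite /ws2.
    by case: eqP => // kE; move: km; rewrite kE ltnNge leq_addr.
  have wlE : forall S0 k, (k < t)%N -> wl (ws2 S0) k = wl ws k.
    move=> S0 k kt; rewrite /wl /ws2 eqn_add2l.
    by case: eqP => // kE; move: kt; rewrite kE ltnn.
  have SE : forall S0, S (ws2 S0) t = S ws t.
    by move=> S0; rewrite /S x0E; apply: st_dep => k kt; apply: wlE.
  have wlt : forall S0, wl (ws2 S0) t = S0 by move=> S0; rewrite /wl /ws2 eqxx.
  under eq_bigr => S0 _ do rewrite /S st_S1 st_S3 -/(S _ _) SE wlt.
  exact: (var_step pS_ge0 pS_sum p_gt0 Hpsd gL).
have Eind : forall t, (t <= m)%N -> E t <= Q * \sum_(0 <= s < t) D s.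
  elim => [_|t IH tm]; first by rewrite Ez big_geq // mulr0.
  apply: le_trans (rec t tm) _.
  rewrite big_nat_recr //= mulrDr lerD2r; exact: IH (ltnW tm).
have Ebd : forall t, (t <= m)%N -> E t <= Q * Ssum.
  move=> t tm; apply: le_trans (Eind t tm) _; apply: ler_wpM2l => //.
  have -> : Ssum = \sum_(0 <= s < m.+1) D s by rewrite big_ltn // Dz add0r.
  rewrite (@big_cat_nat _ _ _ t 0 m.+1) //=; last exact: ltnW.
  rewrite lerDl; apply: sumr_ge0 => s _; exact: D0.
pose c0' := 2^-1 * (eta^-1 - 2 * Lt).
have step : forall t, (1 <= t < m.+1)%N ->
   c0' * D t - (2 * Lt)^-1 * (Q * Ssum) <=
   expect pS N (fun ws => F ((S ws t).1.1) - F ((S ws t).1.2)).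
  move=> t /andP [t1 tm].
  have hE : (2 * Lt)^-1 * E t <= (2 * Lt)^-1 * (Q * Ssum).
    by apply: ler_wpM2l; [rewrite invr_ge0 mulr_ge0 // ltW | exact: Ebd].
  apply: le_trans (lerB (lexx _) hE) _.
  rewrite /D /E -!expectZ -expectB; apply: expect_le => // ws.
  clear hE; case: t t1 tm => // t _ tm.
  rewrite /S st_S2.
  exact: (det_step fd fdE gL Lt0 eta0 hprox).
have tele : \sum_(1 <= t < m.+1) expect pS N (fun ws => F ((S ws t).1.1) - F ((S ws t).1.2))
   = expect pS N (fun ws => F (iter_x g pS eta px m xinit ws j 0)
        - F (iter_x g pS eta px m xinit ws j m.+1)).
  rewrite -expect_sum; apply: expect_ext => ws.
  under eq_bigr => t _ do rewrite /S -st_S1.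
  pose Xf t := F (sarah_state g pS eta px (x0 ws) (wl ws) t).1.1.
  have -> : \sum_(1 <= t < m.+1) (Xf t - Xf t.+1) = - \sum_(1 <= t < m.+1) (Xf t.+1 - Xf t).
    by rewrite -sumrN; apply: eq_bigr => t _; rewrite opprB.
  rewrite (telescope_sumr Xf) // /Xf.
  by rewrite opprB !iterE /S st_S1; reflexivity.
have main : c * Ssum <= expect pS N (fun ws => F (iter_x g pS eta px m xinit ws j 0)
        - F (iter_x g pS eta px m xinit ws j m.+1)).
  rewrite -tele; apply: le_trans (ler_sum_nat step).
  rewrite sumrB -mulr_sumr sumr_const_nat subSS subn0 -/Ssum.
  rewrite le_eqVlt; apply/orP; left; apply/eqP.
  rewrite /c /c0' -mulr_natl; field.
  by rewrite (gt_eqF Lt0) (gt_eqF eta0).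
by rewrite (ler_pdivlMl _ _ c0).
Qed.
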